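(* Let $\mathcal X\subseteq\mathbb R^n$, $\bm c\in\mathbb R^n$, $\varepsilon\in(0,1)$, scenarios $\bm\xi^1,\dots,\bm\xi^N$ with probabilities $p_1,\dots,p_N\ge0$, $\sum_ip_i=1$, and $g(\bm x,\bm\xi)=\max_{j\in[J]}g_j(\bm x,\bm\xi)$. Consider $$v^*=\min_{\bm x\in\mathcal X}\Big\{\bm c^\top\bm x:\ \sum_{i=1}^N p_i\,\mathbb I[g(\bm x,\bm\xi^i)\le 0]\ge 1-\varepsilon\Big\},$$ let $\bm x^*$ be an optimal solution, $\bar I^*=\{i\in[N]: g(\bm x^*,\bm\xi^i)\le0\}$ and $\bar{\mathcal X}^*=\{\bm x\in\mathcal X: g(\bm x,\bm\xi^i)\le 0,\ i\in\bar I^*\}$. Suppose $\mathcal X$ is convex and $g(\cdot,\bm\xi^i)$ is convex for every $i\in\bar I^*$. If there exists $\bar I\subseteq\bar I^*$ such that (i) for each $i\in\bar I$ there exists $\bm x^i\in\bar{\mathcal X}^*$ with $g(\bm x^i,\bm\xi^i)<0$, and (ii) $\sum_{i\in\bar I}p_i>1-\varepsilon$, then $v^*=v^{\mathrm{CVaR}}_S$.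
   Context: $\mathbb I[\cdot]$ is the indicator function, $\bm e$ the all-ones vector. For $\bm\alpha\ge\bm e$, $v^{\mathrm{CVaR}}(\bm\alpha)=\min_{\bm x\in\mathcal X,\beta\le0,\bm s\ge\bm0}\{\bm c^\top\bm x:\ \varepsilon\beta+\sum_i p_is_i\le0,\ s_i+\beta\ge\alpha_i g(\bm x,\bm\xi^i),\ i\in[N]\}$ (value $+\infty$ if infeasible), and $v^{\mathrm{CVaR}}_S=\inf_{\bm\alpha\ge\bm e}v^{\mathrm{CVaR}}(\bm\alpha)$. *)

(* Defs.v *)
From HB Require Import structures.
From mathcomp Require Import all_boot all_order all_algebra.
From mathcomp Require Import classical_sets boolp reals constructive_ereal ereal.
Set Implicit Arguments. Unset Strict Implicit. Unset Printing Implicit Defensive.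
Import Order.TTheory GRing.Theory Num.Theory.
Local Open Scope ring_scope.
Local Open Scope classical_set_scope.

Section Defs.
Variable R : realType.

Definition dotv (n : nat) (c x : 'rV[R]_n) : R := \sum_(k < n) c 0 k * x 0 k.

Definition convex_set (n : nat) (X : set 'rV[R]_n) : Prop :=
  forall (x y : 'rV[R]_n) (t : R), 0 <= t -> t <= 1 -> X x -> X y ->
    X ((1 - t) *: x + t *: y).

Definition convex_fun (n : nat) (f : 'rV[R]_n -> R) : Prop :=
  forall (x y : 'rV[R]_n) (t : R), 0 <= t -> t <= 1 ->
    f ((1 - t) *: x + t *: y) <= (1 - t) * f x + t * f y.

(* g(x, xi) = max_{j in [J]} g_j(x, xi), with J = J'.+1 >= 1 component functions *)
Definition gmax (n J' : nat) (Xi : Type) (gj : 'I_J'.+1 -> 'rV[R]_n -> Xi -> R)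
  (x : 'rV[R]_n) (xi : Xi) : R :=
  \big[Num.max/gj ord0 x xi]_(j < J'.+1) gj j x xi.

(* v^CVaR(alpha); infimum over the feasible set, +oo if infeasible *)
Definition vCVaR (n N : nat) (X : set 'rV[R]_n) (c : 'rV[R]_n) (eps : R)
  (p : 'I_N -> R) (g : 'rV[R]_n -> 'I_N -> R) (alpha : 'I_N -> R) : \bar R :=
  ereal_inf [set (dotv c x)%:E | x in
    [set x | X x /\ exists (beta : R) (s : 'I_N -> R),
       beta <= 0 /\ (forall i, 0 <= s i) /\
       eps * beta + \sum_(i < N) p i * s i <= 0 /\
       (forall i, alpha i * g x i <= s i + beta)]].

Definition vCVaR_S (n N : nat) (X : set 'rV[R]_n) (c : 'rV[R]_n) (eps : R)
  (p : 'I_N -> R) (g : 'rV[R]_n -> 'I_N -> R) : \bar R :=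
  ereal_inf [set vCVaR X c eps p g alpha | alpha in
    [set alpha : 'I_N -> R | forall i, 1 <= alpha i]].

Definition cc_feasible (n N : nat) (X : set 'rV[R]_n) (eps : R)
  (p : 'I_N -> R) (g : 'rV[R]_n -> 'I_N -> R) (x : 'rV[R]_n) : Prop :=
  X x /\ 1 - eps <= \sum_(i < N) p i * (if g x i <= 0 then 1 else 0).

End Defs.

(* Main.v *)
Require Import Defs.
From HB Require Import structures.
From mathcomp Require Import all_boot all_order all_algebra.
From mathcomp Require Import classical_sets boolp reals constructive_ereal ereal.
From mathcomp Require Import ring lra.
Import Order.TTheory GRing.Theory Num.Theory.
Local Open Scope ring_scope.
Local Open Scope classical_set_scope.

Lemma dotv_comb (R : realType) n (c x y : 'rV[R]_n) (t : R) :
  dotv c ((1 - t) *: x + t *: y) = (1 - t) * dotv c x + t * dotv c y.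
Proof.
rewrite /dotv !mulr_sumr -big_split; apply: eq_bigr => k _.
rewrite !mxE; set a := c _ k; set u := x _ k; set v := y _ k; rewrite mulrDr !mulrA [a * (1-t)]mulrC [a*t]mulrC -!mulrA; reflexivity.
Qed.

Lemma cvar_cc (R : realType) N (eps : R) (p : 'I_N -> R) (g : 'I_N -> R)
  (alpha : 'I_N -> R) (beta : R) (s : 'I_N -> R) :
  0 < eps -> (forall i, 0 <= p i) -> \sum_(i < N) p i = 1 ->
  (forall i, 1 <= alpha i) -> beta <= 0 -> (forall i, 0 <= s i) ->
  eps * beta + \sum_(i < N) p i * s i <= 0 ->
  (forall i, alpha i * g i <= s i + beta) ->
  1 - eps <= \sum_(i < N) p i * (if g i <= 0 then 1 else 0).
Proof.
move=> e0 p0 p1 a1 b0 s0 hsum hg.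
set b := fun i => if g i <= 0 then (0:R) else 1.
have split : \sum_(i < N) p i * (if g i <= 0 then 1 else 0) =
  1 - \sum_(i < N) p i * b i.
  have e : \sum_(i < N) p i = \sum_(i < N) p i * (if g i <= 0 then 1 else 0) + \sum_(i < N) p i * b i.
    rewrite -big_split; apply: eq_bigr => i _ /=; rewrite /b.
    by case: (g i <= 0); rewrite ?mulr1 ?mulr0 ?addr0 ?add0r.
  by rewrite p1 in e; apply/eqP; rewrite eq_sym subr_eq -e.
have hpos : forall i, 0 < g i -> - beta < s i.
  move=> i gi; have := hg i; have := a1 i => ai hgi.
  have : 0 < alpha i * g i by apply: mulr_gt0 => //; lra.
  lra.
suff : \sum_(i < N) p i * b i <= eps by rewrite split; lra.
have [bneg | bz] := ltrP beta 0.
  have : (\sum_(i < N) p i * b i) * (- beta) <= eps * (- beta).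
    apply: (le_trans (y := \sum_(i < N) p i * s i)); last lra.
    rewrite mulr_suml; apply: ler_sum => i _; rewrite /b.
    case: (lerP (g i) 0) => gi.
      by rewrite mulr0 mul0r; apply: mulr_ge0.
    rewrite mulr1; apply: ler_wpM2l => //; apply: ltW; exact: hpos.
  by rewrite ler_pM2r ?oppr_gt0.
have beq : beta = 0 by apply/eqP; rewrite eq_le b0 bz.
have hs0 : \sum_(i < N) p i * s i = 0.
  apply/eqP; rewrite eq_le; apply/andP; split; first by move: hsum; rewrite beq; lra.
  by apply: sumr_ge0 => i _; apply: mulr_ge0.
have each := (psumr_eq0P (fun i _ => mulr_ge0 (p0 i) (s0 i)) hs0).
rewrite big1 ?ltW // => i _; rewrite /b; case: (lerP (g i) 0) => gi; first by rewrite mulr0.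
have := each i isT; move/eqP; rewrite mulf_eq0 => /orP [/eqP -> | /eqP si].
  by rewrite mul0r.
by have := hpos i gi; rewrite si beq; lra.
Qed.

Lemma slater_seq (R : realType) (n N J' : nat) (Xi : Type)
  (X : set 'rV[R]_n) (xi : 'I_N -> Xi) (gj : 'I_J'.+1 -> 'rV[R]_n -> Xi -> R)
  (xstar : 'rV[R]_n) (Ibar : {set 'I_N}) (s : seq 'I_N) :
  convex_set X -> X xstar ->
  (forall i, gmax gj xstar (xi i) <= 0 -> convex_fun (fun x => gmax gj x (xi i))) ->
  (forall i, i \in Ibar -> gmax gj xstar (xi i) <= 0) ->
  (forall i, i \in Ibar -> exists xi_pt : 'rV[R]_n,
     X xi_pt /\
     (forall k, gmax gj xstar (xi k) <= 0 -> gmax gj xi_pt (xi k) <= 0) /\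
     gmax gj xi_pt (xi i) < 0) ->
  (forall i, i \in s -> i \in Ibar) ->
  exists y, X y /\ (forall k, gmax gj xstar (xi k) <= 0 -> gmax gj y (xi k) <= 0)
    /\ (forall i, i \in s -> gmax gj y (xi i) < 0).
Proof.
move=> cX Xs cg sub sl.
elim: s => [|a s IH] hs.
  by exists xstar; split => //; split => // i; rewrite in_nil.
have [y [Xy [hy1 hy2]]] := IH (fun i hi => hs i (mem_behead (s:=a :: s) hi)).
have [z [Xz [hz1 hz2]]] := sl a (hs a (mem_head a s)).
have h2 : (0:R) <= 2^-1 by rewrite invr_ge0.
have h2' : (2^-1:R) <= 1 by rewrite invf_le1 // ler1n.
exists ((1 - 2^-1) *: y + 2^-1 *: z); split; first exact: cX.
have key : forall k, gmax gj xstar (xi k) <= 0 ->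
  gmax gj ((1 - 2^-1) *: y + 2^-1 *: z) (xi k) <=
  (1 - 2^-1) * gmax gj y (xi k) + 2^-1 * gmax gj z (xi k).
  by move=> k hk; apply: cg.
split.
  move=> k hk; apply: (le_trans (key k hk)).
  have := hy1 k hk; have := hz1 k hk; lra.
move=> i; rewrite in_cons => /orP [/eqP -> | hi].
  apply: (le_lt_trans (key a (sub a (hs a (mem_head a s))))).
  have := hy1 a (sub a (hs a (mem_head a s))); lra.
have hk := sub i (hs i (mem_behead (s:=a :: s) hi)) .
apply: (le_lt_trans (key i hk)).
have := hy2 i hi; have := hz1 i hk; lra.
Qed.

Theorem theorem2 (R : realType) (n N J' : nat) (Xi : Type)
  (X : set 'rV[R]_n) (c : 'rV[R]_n) (eps : R)
  (xi : 'I_N -> Xi) (p : 'I_N -> R)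
  (gj : 'I_J'.+1 -> 'rV[R]_n -> Xi -> R)
  (xstar : 'rV[R]_n) (Ibar : {set 'I_N}) :
  0 < eps -> eps < 1 ->
  (forall i, 0 <= p i) -> \sum_(i < N) p i = 1 ->
  (* x* is an optimal solution of the chance-constrained program *)
  cc_feasible X eps p (fun x i => gmax gj x (xi i)) xstar ->
  (forall x, cc_feasible X eps p (fun x i => gmax gj x (xi i)) x ->
     dotv c xstar <= dotv c x) ->
  convex_set X ->
  (forall i, gmax gj xstar (xi i) <= 0 -> convex_fun (fun x => gmax gj x (xi i))) ->
  (* Ibar is a subset of Ibar* *)
  (forall i, i \in Ibar -> gmax gj xstar (xi i) <= 0) ->
  (* (i) Slater-type points in Xbar* *)
  (forall i, i \in Ibar -> exists xi_pt : 'rV[R]_n,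
     X xi_pt /\
     (forall k, gmax gj xstar (xi k) <= 0 -> gmax gj xi_pt (xi k) <= 0) /\
     gmax gj xi_pt (xi i) < 0) ->
  (* (ii) *)
  1 - eps < \sum_(i in Ibar) p i ->
  (dotv c xstar)%:E = vCVaR_S X c eps p (fun x i => gmax gj x (xi i)).
Proof.
move=> e0 e1 p0 p1 [Xs ccs] hopt cX cg sub sl hI.
apply/eqP; rewrite eq_le; apply/andP; split.
  apply/ereal_infP => ? [alpha ha <-]; apply/ereal_infP => ? [x [Xx]].
  move=> [beta [s [b0 [s0 [hsum hg]]]]] <-; rewrite lee_fin; apply: hopt; split => //.
  exact: (@cvar_cc R N eps p (fun i => gmax gj x (xi i)) alpha beta s e0 p0 p1 (ha : forall i, 1 <= alpha i) b0 s0 hsum hg).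
apply/lee_addgt0Pr => e epos.
have [y [Xy [hy1 hy2]]] := @slater_seq R n N J' Xi X xi gj xstar Ibar (enum Ibar) cX Xs cg sub sl
  (fun i hi => ltac:(by rewrite mem_enum in hi)).
set d := dotv c y - dotv c xstar.
set w := e / (`|d| + 1).
have wpos : 0 < w by apply: divr_gt0 => //; apply: ltr_wpDl.
have we : w * (`|d| + 1) = e by rewrite /w divfK // gt_eqF // ltr_wpDl.
set lam := Num.min 1 w.
have l0 : 0 < lam by rewrite lt_min ltr01 wpos.
have l1 : lam <= 1 by rewrite ge_min lexx.
have lw : lam <= w by rewrite ge_min lexx orbT.
set xl := (1 - lam) *: xstar + lam *: y.
have Xxl : X xl by apply: cX => //; lra.
set G := fun i => gmax gj xl (xi i).
have hneg : forall i, i \in Ibar -> G i < 0.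
  move=> i hi; have hk := sub i hi.
  have := cg i hk xstar y lam (ltW l0) l1; rewrite -/xl -/(G i) => hc.
  apply: (le_lt_trans hc).
  have h1 : (1 - lam) * gmax gj xstar (xi i) <= 0 by apply: mulr_ge0_le0 => //; lra.
  have h2 : lam * gmax gj y (xi i) < 0 by rewrite pmulr_rlt0 // hy2 // mem_enum.
  lra.
set M := \sum_(i < N) p i * (if i \in Ibar then 0 else `|G i|).
set q := \sum_(i < N) p i * (if i \in Ibar then 0 else 1).
have M0 : 0 <= M.
  apply: sumr_ge0 => i _; apply: mulr_ge0 => //; by case: (i \in Ibar).
have qe : q < eps.
  have e2 : \sum_(i < N) p i = \sum_(i in Ibar) p i + q.
    rewrite [\sum_(i in Ibar) _]big_mkcond /= -big_split; apply: eq_bigr => i _ /=.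
    by case: (i \in Ibar); rewrite ?mulr1 ?mulr0 ?addr0 ?add0r.
  move: hI; rewrite p1 in e2; lra.
have eq0 : 0 < eps - q by lra.
set t := M / (eps - q).
have t0 : 0 <= t by apply: divr_ge0 => //; apply: ltW.
have tq : t * (eps - q) = M by rewrite /t divfK // gt_eqF.
set alpha := fun i => if i \in Ibar then 1 + t / (- G i) else 1.
set s := fun i => if i \in Ibar then 0 else `|G i| + t.
have ha : forall i, 1 <= alpha i.
  move=> i; rewrite /alpha; case hi: (i \in Ibar) => //.
  rewrite lerDl; apply: divr_ge0 => //; rewrite oppr_ge0; apply: ltW; exact: hneg.
have hs0 : forall i, 0 <= s i.
  by move=> i; rewrite /s; case: (i \in Ibar) => //; apply: addr_ge0.
have hps : \sum_(i < N) p i * s i = M + t * q.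
  rewrite /M /q mulr_sumr -big_split; apply: eq_bigr => i _ /=; rewrite /s.
  case: (i \in Ibar); first by rewrite !mulr0 addr0.
  by rewrite mulr1 mulrDr [t * _]mulrC.
have hsum : eps * (- t) + \sum_(i < N) p i * s i <= 0.
  rewrite hps; have : t * eps - t * q = M by rewrite -mulrBr.
  lra.
have hg : forall i, alpha i * G i <= s i + - t.
  move=> i; rewrite /alpha /s; case hi: (i \in Ibar).
    have gn := hneg i hi.
    have -> : (1 + t / - G i) * G i = G i - t.
      by rewrite mulrDl mul1r invrN mulrN mulNr -mulrA mulVf ?mulr1 // lt_eqF.
    lra.
  rewrite mul1r; have := ler_norm (G i); lra.
apply: ge_ereal_inf.
exists (vCVaR X c eps p (fun x i => gmax gj x (xi i)) alpha); first by exists alpha.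
apply: ge_ereal_inf.
exists (dotv c xl)%:E.
  exists xl => //; split => //; exists (- t), s; split; first lra.
  by split => //; split.
rewrite -EFinD lee_fin /xl dotv_comb.
have : lam * d <= e.
  apply: (le_trans (ler_norm _)) => //.
  apply: (le_trans (y := lam * `|d|)).
    by rewrite normrM (ger0_norm (ltW l0)).
  have : lam * `|d| <= w * `|d| by apply: ler_wpM2r.
  move: we; rewrite mulrDr mulr1 => we.
  lra.
rewrite /d; lra.
Qed.
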